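(* Let $\Psi=\{\psi_i\}_{i\in I}$ be a lower frame sequence in a separable Hilbert space $\mathcal{H}$ with canonical dual $\widetilde\Psi=\{\widetilde\psi_i\}_{i\in I}$, and let $h\in\mathcal{H}$. Suppose $h$ is represented weakly by $\Psi$, i.e. there is a scalar sequence $\{c_i\}_{i\in I}$ such that $\langle h,g\rangle=\langle\sum_{i\in I}c_i\psi_i,g\rangle=\sum_{i\in I}c_i\langle\psi_i,g\rangle$ for all $g\in\mathcal{D}(C_\Psi)$. Then $$\sum_{i\in I}|c_i|^2=\sum_{i\in I}|\langle h,\widetilde\psi_i\rangle|^2+\sum_{i\in I}|c_i-\langle h,\widetilde\psi_i\rangle|^2.$$ In particular $\sum_i|c_i|^2\ge\sum_i|\langle h,\widetilde\psi_i\rangle|^2$.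
   Context: $I$ is countable. $\mathcal{D}(C_\Psi)=\{f\in\mathcal{H}:\{\langle f,\psi_i\rangle\}_i\in\ell^2\}$, $\mathcal{H}_\Psi:=\overline{\mathcal{D}(C_\Psi)}$, $\pi_{\mathcal{H}_\Psi}$ the orthogonal projection onto $\mathcal{H}_\Psi$. $\Psi$ is a lower frame sequence if there is $A>0$ with $A\|f\|^2\le\sum_i|\langle f,\psi_i\rangle|^2$ for all $f\in\mathcal{D}(C_\Psi)$. The generalized frame operator is $\Gamma_\Psi:=(C^r_\Psi)^*C^r_\Psi$, where $C^r_\Psi:\mathcal{D}(C_\Psi)\subseteq\mathcal{H}_\Psi\to\ell^2$, $C^r_\Psi f=\{\langle f,\psi_i\rangle\}_i$; for a lower frame sequence $\Gamma_\Psi:\mathcal{D}(\Gamma_\Psi)\to\mathcal{H}_\Psi$ is bijective with bounded inverse on $\mathcal{H}_\Psi$. The canonical dual is $\widetilde\psi_i:=\Gamma_\Psi^{-1}\pi_{\mathcal{H}_\Psi}\psi_i$. *)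

(* Defs.v *)
From mathcomp Require Import all_boot all_order all_algebra.
From mathcomp Require Import all_classical all_reals all_analysis.
From mathcomp.real_closed Require Export complex.
Import Order.TTheory GRing.Theory Num.Theory.
Local Open Scope classical_set_scope.
Local Open Scope ring_scope.

Set Implicit Arguments.
Unset Strict Implicit.
Unset Printing Implicit Defensive.

Section Hilbert.
Variable R : realType.
Local Notation C := R[i].

Definition cabs2 (z : C) : R := complex.Re z ^+ 2 + complex.Im z ^+ 2.

Definition cconv (u : nat -> C) (l : C) : Prop :=
  forall e : R, 0 < e -> exists N : nat, forall n, (N <= n)%N -> cabs2 (u n - l) < e.

Variable V : lmodType C.
Variable ip : V -> V -> C.   (* inner product, linear in the first argument *)

Definition hnorm2 (x : V) : R := complex.Re (ip x x).

Record is_sep_hilbert : Prop := {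
  ip_linl : forall (a : C) (x y z : V), ip (a *: x + y) z = a * ip x z + ip y z;
  ip_herm : forall x y : V, ip y x = (ip x y)^*;
  ip_pos : forall x : V, 0 <= ip x x;
  ip_def : forall x : V, ip x x = 0 -> x = 0;
  ip_complete : forall u : nat -> V,
    (forall e : R, 0 < e -> exists N : nat, forall m n, (N <= m)%N -> (N <= n)%N ->
        hnorm2 (u m - u n) < e) ->
    exists x : V, forall e : R, 0 < e -> exists N : nat, forall n, (N <= n)%N ->
        hnorm2 (u n - x) < e;
  ip_separable : exists d : nat -> V, forall (x : V) (e : R), 0 < e ->
    exists n : nat, hnorm2 (x - d n) < e }.

(* Index set I : a countable set, realised as a subset of nat (sums over I are
   taken in the order of nat). psi : nat -> V, only psi i for i \in I matter. *)
Variables (I : set nat) (psi : nat -> V).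

Definition domC (f : V) : Prop :=
  (\sum_(0 <= i <oo | i \in I) (cabs2 (ip f (psi i)))%:E < +oo)%E.

Definition hclosure (M : set V) : set V :=
  fun x => forall e : R, 0 < e -> exists2 m, M m & hnorm2 (x - m) < e.

Definition HPsi : set V := hclosure domC.

Definition orth_proj_pt (M : set V) (x p : V) : Prop :=
  M p /\ forall m, M m -> ip (x - p) m = 0.

Definition lower_frame_seq : Prop :=
  exists A : R, 0 < A /\ forall f, domC f ->
    ((A * hnorm2 f)%:E <= \sum_(0 <= i <oo | i \in I) (cabs2 (ip f (psi i)))%:E)%E.

(* Generalized frame operator Gamma = (C^r)^* C^r, as a relation:
   gen_frame_op f y  <->  f \in D(Gamma) and Gamma f = y.
   f \in D(C^r), C^r f \in D((C^r)^* ) and (C^r)^*(C^r f) = y, i.e. y \in H_Psi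
   with <C^r f, C^r g>_{l^2} = <y, g> for all g \in D(C^r) = D(C_Psi). *)
Definition gen_frame_op (f y : V) : Prop :=
  domC f /\ HPsi y /\
  forall g, domC g ->
    cconv (fun n => \sum_(0 <= i < n | i \in I) ip f (psi i) * (ip g (psi i))^*)
          (ip y g).

(* psit is the canonical dual: psit_i = Gamma^{-1} pi_{H_Psi} psi_i, i.e.
   Gamma psit_i = pi_{H_Psi} psi_i (Gamma is injective for a lower frame seq.) *)
Definition is_canonical_dual (psit : nat -> V) : Prop :=
  forall i, i \in I -> exists p, orth_proj_pt HPsi (psi i) p /\ gen_frame_op (psit i) p.

Definition weakly_represents (c : nat -> C) (h : V) : Prop :=
  forall g, domC g ->
    cconv (fun n => \sum_(0 <= i < n | i \in I) c i * ip (psi i) g) (ip h g).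

End Hilbert.

(* Main.v *)
Require Import Defs.
From mathcomp Require Import all_boot all_order all_algebra.
From mathcomp Require Import all_classical all_reals all_analysis.
From mathcomp.real_closed Require Import complex.
From mathcomp Require Import ring lra.
Import Order.TTheory GRing.Theory Num.Theory.
Local Open Scope classical_set_scope.
Local Open Scope ring_scope.
Set Implicit Arguments.
Unset Strict Implicit.

Section Series.
Local Open Scope complex_scope.
Local Open Scope ring_scope.

Variable R : realType.
Variable I : set nat.

Definition sp (t : nat -> R) n := \sum_(0 <= i < n | i \in I) t i.
Definition ES (t : nat -> R) := (\sum_(0 <= i <oo | i \in I) (t i)%:E)%E.

Lemma sp_mono t : (forall i, i \in I -> 0 <= t i) ->
  forall n m, (n <= m)%N -> sp t n <= sp t m.
Proof.
move=> t0 n m nm; rewrite /sp (big_cat_nat (leq0n n) nm) /= lerDl.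
by apply: sumr_ge0 => i /t0.
Qed.

Lemma sp_le_ES t : (forall i, i \in I -> 0 <= t i) -> forall n, ((sp t n)%:E <= ES t)%E.
Proof.
move=> t0 n; rewrite /sp /ES -sumEFin.
by apply: nneseries_lim_ge => i _ /t0; rewrite lee_fin.
Qed.

Lemma ES_le t M : (forall i, i \in I -> 0 <= t i) -> (forall n, sp t n <= M) ->
  (ES t <= M%:E)%E.
Proof.
move=> t0 tM; rewrite /ES.
apply: lime_le.
  by apply: is_cvg_nneseries => i _ /t0; rewrite lee_fin.
by apply: nearW => n; rewrite sumEFin lee_fin; apply: tM.
Qed.

Lemma ES_ge0 t : (forall i, i \in I -> 0 <= t i) -> (0 <= ES t)%E.
Proof.
move=> t0; have := sp_le_ES t0 0; rewrite /sp big_geq //.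
Qed.

Lemma ES_fin t : (forall i, i \in I -> 0 <= t i) -> (ES t < +oo)%E ->
  ES t = (fine (ES t))%:E.
Proof.
move=> t0 fin; rewrite fineK // ge0_fin_numE //; exact: ES_ge0.
Qed.

Lemma sp_le_fine t : (forall i, i \in I -> 0 <= t i) -> (ES t < +oo)%E ->
  forall n, sp t n <= fine (ES t).
Proof.
move=> t0 fin n; rewrite -lee_fin -ES_fin //; exact: sp_le_ES.
Qed.

Lemma sp_approx t : (forall i, i \in I -> 0 <= t i) -> (ES t < +oo)%E ->
  forall e, 0 < e -> exists N, forall n, (N <= n)%N -> fine (ES t) - e < sp t n.
Proof.
move=> t0 fin e e0.
apply: contrapT => /forallNP H.
have : (ES t <= (fine (ES t) - e)%:E)%E.
  apply: ES_le => // n; have := H n => /existsNP [m] /not_implyP [nm].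
  move/negP; rewrite -leNgt => hm.
  by apply: le_trans hm; apply: sp_mono.
rewrite {1}ES_fin // lee_fin; lra.
Qed.

Lemma ES_split (ta tb tc tr : nat -> R) :
  (forall i, i \in I -> 0 <= ta i) -> (forall i, i \in I -> 0 <= tb i) ->
  (forall i, i \in I -> 0 <= tc i) ->
  (forall i, i \in I -> tc i = ta i + tb i + 2 * tr i) ->
  (forall e, 0 < e -> exists N, forall n, (N <= n)%N -> `|sp tr n| < e) ->
  ES tc = (ES ta + ES tb)%E.
Proof.
move=> a0 b0 c0 tE rcv.
have spE n : sp tc n = sp ta n + sp tb n + 2 * sp tr n.
  rewrite /sp -big_split /= mulr_sumr -big_split /=.
  by apply: eq_bigr => i /tE.
have [N1 HN1] := rcv 1 ltr01.
have bnd (t1 t2 : nat -> R) M : (forall i, i \in I -> 0 <= t1 i) ->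
    (forall i, i \in I -> 0 <= t2 i) ->
    (forall n, (N1 <= n)%N -> sp t1 n <= sp t2 n + M) ->
    (ES t2 < +oo)%E -> (ES t1 < +oo)%E.
  move=> t10 t20 h fin; apply: (le_lt_trans (ES_le (M := fine (ES t2) + M) t10 _)); last first.
    by rewrite ltry.
  move=> n; case: (leqP N1 n) => hn.
    by apply: (le_trans (h _ hn)); rewrite lerD2r; apply: sp_le_fine.
  apply: (le_trans (sp_mono t10 (ltnW hn))).
  by apply: (le_trans (h _ (leqnn _))); rewrite lerD2r; apply: sp_le_fine.
have finab : (ES ta < +oo)%E -> (ES tb < +oo)%E -> (ES tc < +oo)%E.
  move=> fa fb.
  have tab0 : forall i, i \in I -> 0 <= ta i + tb i.
    by move=> i iI; rewrite addr_ge0 // ?a0 ?b0.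
  have fab : (ES (fun i => (ta i + tb i)%R) < +oo)%E.
    apply: (le_lt_trans (ES_le (M := fine (ES ta) + fine (ES tb)) tab0 _)); last first.
      by rewrite ltry.
    move=> n; rewrite /sp big_split /=; apply: lerD; exact: sp_le_fine.
  apply: (bnd _ _ 2 c0 tab0 _ fab) => n /HN1 hn.
  rewrite spE /sp big_split /=.
  move: hn; rewrite /sp => h.
  have := ler_norm (\sum_(0 <= i < n | i \in I) tr i). lra.
have [fa|ia] := boolP (ES ta < +oo)%E; last first.
  have -> : ES ta = +oo%E by move: ia; rewrite -leNgt leye_eq => /eqP.
  rewrite addye; last by rewrite gt_eqF // (lt_le_trans _ (ES_ge0 b0)).
  apply/eqP; rewrite eq_le leey /= leNgt; apply/negP => fc.
  move/negP: ia; apply.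
  apply: (bnd _ _ 2 a0 c0 _ fc) => n /HN1 hn; rewrite spE.
  move: hn; rewrite ltr_norml => /andP[h1 h2].
  have := sp_mono b0 (leq0n n); rewrite {1}/sp big_geq // => hb0. lra.
have [fb|ib] := boolP (ES tb < +oo)%E; last first.
  have -> : ES tb = +oo%E by move: ib; rewrite -leNgt leye_eq => /eqP.
  rewrite addey; last by rewrite gt_eqF // (lt_le_trans _ (ES_ge0 a0)).
  apply/eqP; rewrite eq_le leey /= leNgt; apply/negP => fc.
  move/negP: ib; apply.
  apply: (bnd _ _ 2 b0 c0 _ fc) => n /HN1 hn; rewrite spE.
  move: hn; rewrite ltr_norml => /andP[h1 h2].
  have := sp_mono a0 (leq0n n); rewrite {1}/sp big_geq // => hb0. lra.
have fc := finab fa fb.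
rewrite (ES_fin c0 fc) (ES_fin a0 fa) (ES_fin b0 fb) -EFinD; congr (_%:E).
set Lc := fine (ES tc); set La := fine (ES ta); set Lb := fine (ES tb).
apply/eqP; rewrite -subr_eq0 -normr_eq0; apply/eqP.
apply/eqP; rewrite eq_le normr_ge0 andbT.
apply/ler_addgt0Pr => e e0; rewrite add0r.
have e50 : 0 < e / 5 by rewrite divr_gt0.
have [Na HNa] := sp_approx a0 fa e50.
have [Nb HNb] := sp_approx b0 fb e50.
have [Nc HNc] := sp_approx c0 fc e50.
have [Nr HNr] := rcv _ e50.
set n := maxn Na (maxn Nb (maxn Nc Nr)).
have ha := HNa n (leq_maxl _ _).
have hb := HNb n (leq_trans (leq_maxl _ _) (leq_maxr _ _)).
have hc := HNc n (leq_trans (leq_maxl _ _) (leq_trans (leq_maxr _ _) (leq_maxr _ _))).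
have hr := HNr n (leq_trans (leq_maxr _ _) (leq_trans (leq_maxr _ _) (leq_maxr _ _))).
have ua := sp_le_fine a0 fa n; have ub := sp_le_fine b0 fb n; have uc := sp_le_fine c0 fc n.
have := spE n; rewrite -/La -/Lb -/Lc in ha hb hc ua ub uc *.
move: hr; rewrite ltr_norml => /andP[r1 r2].
move: (sp ta n) (sp tb n) (sp tc n) (sp tr n) ha hb hc ua ub uc r1 r2 => a b c r *.
rewrite ler_norml; apply/andP; split; lra.
Qed.

End Series.


Section Basics.
Local Open Scope complex_scope.
Local Open Scope ring_scope.

Variable R : realType.
Local Notation C := R[i].
Local Notation Re := complex.Re.
Local Notation Im := complex.Im.

Lemma discr (a b c : R) : 0 <= c -> (forall t, 0 <= a + 2 * t * b + t ^+ 2 * c) ->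
  b ^+ 2 <= a * c.
Proof.
move=> c0 H; have [c0'|] := ltP 0 c.
  have := H (- b / c).
  have -> : a + 2 * (- b / c) * b + (- b / c) ^+ 2 * c = (a * c - b ^+ 2) / c.
    by field; rewrite gt_eqF.
  by rewrite pmulr_lge0 ?invr_gt0 // subr_ge0.
move=> cle; have c00 : c = 0 by apply/eqP; rewrite eq_le cle c0.
rewrite c00 mulr0.
have [b0|bn0] := eqVneq b 0; first by rewrite b0 expr0n.
have := H (- (a + 1) / (2 * b)); rewrite c00 mulr0 addr0.
have -> : 2 * (- (a + 1) / (2 * b)) * b = - (a + 1).
  by field.
lra.
Qed.

Lemma cabs2_ge0 (z : C) : 0 <= cabs2 z.
Proof. by rewrite /cabs2 addr_ge0 // sqr_ge0. Qed.

Lemma cabs2_eq0 (z : C) : cabs2 z = 0 -> z = 0.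
Proof.
case: z => a b; rewrite /cabs2 /= => h.
have a0 : a ^+ 2 = 0 by apply/eqP; rewrite eq_le sqr_ge0 andbT; have := sqr_ge0 b; lra.
have b0 : b ^+ 2 = 0 by lra.
by move/eqP: a0; rewrite sqrf_eq0 => /eqP ->; move/eqP: b0; rewrite sqrf_eq0 => /eqP ->.
Qed.

Lemma cabs2D_le (a b : C) : cabs2 (a + b) <= 2 * cabs2 a + 2 * cabs2 b.
Proof.
case: a => a1 a2; case: b => b1 b2; rewrite /cabs2 /=.
have := sqr_ge0 (a1 - b1); have := sqr_ge0 (a2 - b2). nra.
Qed.

Lemma cabs2N (a : C) : cabs2 (- a) = cabs2 a.
Proof. case: a => a1 a2; rewrite /cabs2 /=; ring. Qed.

Lemma cabs2M (a b : C) : cabs2 (a * b) = cabs2 a * cabs2 b.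
Proof. case: a => a1 a2; case: b => b1 b2; rewrite /cabs2 /=; ring. Qed.

Lemma cabs2_conj (a : C) : cabs2 (a^*) = cabs2 a.
Proof. case: a => a1 a2; rewrite /cabs2 /=; ring. Qed.

Lemma Re_sum (r : seq nat) (P : pred nat) (F : nat -> C) :
  Re (\sum_(i <- r | P i) F i) = \sum_(i <- r | P i) Re (F i).
Proof.
apply: (big_morph (@complex.Re R)) => // x y.
by case: x => ? ?; case: y.
Qed.

Lemma Im_sum (r : seq nat) (P : pred nat) (F : nat -> C) :
  Im (\sum_(i <- r | P i) F i) = \sum_(i <- r | P i) Im (F i).
Proof.
apply: (big_morph (@complex.Im R)) => // x y.
by case: x => ? ?; case: y.
Qed.

Lemma sq_lt (x e : R) : 0 < e -> x ^+ 2 < e ^+ 2 -> `|x| < e.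
Proof.
move=> e0 h; rewrite ltr_norml; apply/andP; split; nra.
Qed.

Lemma cconv_unique (u : nat -> C) a b : cconv u a -> cconv u b -> a = b.
Proof.
move=> ha hb; apply/eqP; rewrite -subr_eq0; apply/eqP; apply: cabs2_eq0.
apply/eqP; rewrite eq_le cabs2_ge0 andbT.
apply/ler_addgt0Pr => e e0; rewrite add0r.
have e40 : 0 < e / 4 by rewrite divr_gt0.
have [N1 h1] := ha _ e40; have [N2 h2] := hb _ e40.
have k1 := h1 (maxn N1 N2) (leq_maxl _ _).
have k2 := h2 (maxn N1 N2) (leq_maxr _ _).
have := cabs2D_le (a - u (maxn N1 N2)) (u (maxn N1 N2) - b).
rewrite -(cabs2N (u _ - a)) opprB in k1.
have -> : a - u (maxn N1 N2) + (u (maxn N1 N2) - b) = a - b.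
  by rewrite addrA subrK.
lra.
Qed.

Lemma cconv_conj (u : nat -> C) a : cconv u a -> cconv (fun n => (u n)^*) a^*.
Proof.
move=> h e e0; have [N hN] := h e e0; exists N => n /hN.
by rewrite -rmorphB cabs2_conj.
Qed.

Lemma cconv_of_parts (u : nat -> C) a :
  (forall e, 0 < e -> exists N, forall n, (N <= n)%N -> `|Re (u n) - Re a| < e) ->
  (forall e, 0 < e -> exists N, forall n, (N <= n)%N -> `|Im (u n) - Im a| < e) ->
  cconv u a.
Proof.
move=> hr hi e e0.
set d := Num.min 1 (e / 2).
have d0 : 0 < d by rewrite lt_min ltr01 divr_gt0.
have d1 : d <= 1 by rewrite ge_min lexx.
have d2 : d <= e / 2 by rewrite ge_min lexx orbT.
have [N1 h1] := hr _ d0; have [N2 h2] := hi _ d0.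
exists (maxn N1 N2) => n hn.
have k1 := h1 n (leq_trans (leq_maxl _ _) hn).
have k2 := h2 n (leq_trans (leq_maxr _ _) hn).
have -> : cabs2 (u n - a) = `|Re (u n) - Re a| ^+ 2 + `|Im (u n) - Im a| ^+ 2.
  have ReB (x y : C) : Re (x - y) = Re x - Re y by case: x => ? ?; case: y.
  have ImB (x y : C) : Im (x - y) = Im x - Im y by case: x => ? ?; case: y.
  by rewrite !real_normK ?num_real // /cabs2 ReB ImB.
move: k1 k2; move: (normr_ge0 (Re (u n) - Re a)) (normr_ge0 (Im (u n) - Im a)).
move: `|Re (u n) - Re a| `|Im (u n) - Im a| => x y x0 y0 hx hy.
nra.
Qed.

End Basics.


Section IP.
Local Open Scope complex_scope.
Local Open Scope ring_scope.

Variable R : realType.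
Local Notation C := R[i].
Local Notation Re := complex.Re.
Local Notation Im := complex.Im.
Variable V : lmodType C.
Variable ip : V -> V -> C.
Variable HH : is_sep_hilbert ip.

Lemma cjD (a b : C) : (a + b)^* = a^* + b^*.
Proof. by case: a => ? ?; case: b => ? ? /=; congr Complex; rewrite opprD. Qed.
Lemma cjM (a b : C) : (a * b)^* = a^* * b^*.
Proof. by case: a => ? ?; case: b => ? ? /=; congr Complex; ring. Qed.
Lemma cjN (a : C) : (- a)^* = - a^*.
Proof. by case: a. Qed.
Lemma cj0 : (0 : C)^* = 0.
Proof. by apply/eqP; rewrite eq_complex /= oppr0 !eqxx. Qed.

Lemma ip0l z : ip 0 z = 0.
Proof.
have := ip_linl HH 1 0 0 z; rewrite scaler0 addr0 mul1r => /esym/eqP.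
by rewrite -subr_eq0 addrK => /eqP.
Qed.

Lemma ipDl x y z : ip (x + y) z = ip x z + ip y z.
Proof. by have := ip_linl HH 1 x y z; rewrite scale1r mul1r. Qed.

Lemma ipZl a x z : ip (a *: x) z = a * ip x z.
Proof. by have := ip_linl HH a x 0 z; rewrite addr0 ip0l addr0. Qed.

Lemma ipNl x z : ip (- x) z = - ip x z.
Proof. by rewrite -scaleN1r ipZl mulN1r. Qed.

Lemma ipBl x y z : ip (x - y) z = ip x z - ip y z.
Proof. by rewrite ipDl ipNl. Qed.

Lemma ipC x y : ip x y = (ip y x)^*.
Proof. exact: ip_herm HH y x. Qed.

Lemma ipDr x y z : ip x (y + z) = ip x y + ip x z.
Proof. by rewrite ipC ipDl cjD -!ipC. Qed.

Lemma ipZr a x y : ip x (a *: y) = a^* * ip x y.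
Proof. by rewrite ipC ipZl cjM -ipC. Qed.

Lemma ip0r x : ip x 0 = 0.
Proof. by rewrite ipC ip0l cj0. Qed.

Lemma ipNr x z : ip x (- z) = - ip x z.
Proof. by rewrite ipC ipNl cjN -ipC. Qed.

Lemma ipBr x y z : ip x (y - z) = ip x y - ip x z.
Proof. by rewrite ipDr ipNr. Qed.

Lemma ipxx x : ip x x = (hnorm2 ip x)%:C.
Proof.
move: (ip_pos HH x); rewrite /hnorm2; case: (ip x x) => a b.
by rewrite lecE /= => /andP[/eqP -> _].
Qed.

Lemma hnorm2_ge0 x : 0 <= hnorm2 ip x.
Proof.
move: (ip_pos HH x); rewrite /hnorm2; case: (ip x x) => a b.
by rewrite lecE /= => /andP[_ ->].
Qed.

Lemma hnorm2_eq0 x : hnorm2 ip x = 0 -> x = 0.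
Proof. by move=> h; apply: (ip_def HH); rewrite ipxx h. Qed.

Lemma hnorm2D x y : hnorm2 ip (x + y) = hnorm2 ip x + hnorm2 ip y + 2 * Re (ip x y).
Proof.
rewrite {1}/hnorm2 ipDl !ipDr (ipC y x) !ipxx.
by case: (ip x y) => a b /=; ring.
Qed.

Lemma hnorm2Z a x : hnorm2 ip (a *: x) = cabs2 a * hnorm2 ip x.
Proof.
rewrite {1}/hnorm2 ipZl ipZr ipxx.
by case: a => a b; rewrite /cabs2 /=; ring.
Qed.

Lemma hnorm2N x : hnorm2 ip (- x) = hnorm2 ip x.
Proof. by rewrite -scaleN1r hnorm2Z /cabs2 /=; ring. Qed.

Lemma Re_ip_sym x y : Re (ip y x) = Re (ip x y).
Proof. by rewrite ipC; case: (ip x y). Qed.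

Lemma ReCS x y : Re (ip x y) ^+ 2 <= hnorm2 ip x * hnorm2 ip y.
Proof.
apply: discr; first exact: hnorm2_ge0.
move=> t; have := hnorm2_ge0 (x + t%:C *: y).
rewrite hnorm2D hnorm2Z ipZr.
have -> : cabs2 t%:C = t ^+ 2 by rewrite /cabs2 /=; ring.
by case: (ip x y) => a b /= h; nra.
Qed.

Lemma cabs2_ip x y : cabs2 (ip x y) <= 2 * (hnorm2 ip x * hnorm2 ip y).
Proof.
have h1 := ReCS x y.
have h2 := ReCS x ('i *: y).
rewrite hnorm2Z ipZr in h2.
have ci : cabs2 'i = 1 :> R by rewrite /cabs2 /=; ring.
rewrite ci mul1r in h2.
move: h1 h2; rewrite /cabs2; case: (ip x y) => a b /=.
have := hnorm2_ge0 x; have := hnorm2_ge0 y. nra.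
Qed.

End IP.


Section RCV.
Local Open Scope complex_scope.
Local Open Scope ring_scope.

Variable R : realType.
Definition rcv (u : nat -> R) (l : R) :=
  forall e, 0 < e -> exists N, forall n, (N <= n)%N -> `|u n - l| < e.

Lemma rcv_add u v a b : rcv u a -> rcv v b -> rcv (fun n => u n + v n) (a + b).
Proof.
move=> hu hv e e0; have e2 : 0 < e / 2 by rewrite divr_gt0.
have [N1 h1] := hu _ e2; have [N2 h2] := hv _ e2.
exists (maxn N1 N2) => n hn.
have k1 := h1 n (leq_trans (leq_maxl _ _) hn).
have k2 := h2 n (leq_trans (leq_maxr _ _) hn).
have -> : u n + v n - (a + b) = (u n - a) + (v n - b) by ring.
apply: (le_lt_trans (ler_normD _ _)); lra.
Qed.

Lemma rcv_scale u a c : rcv u a -> rcv (fun n => c * u n) (c * a).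
Proof.
move=> hu e e0; have e2 : 0 < e / (`|c| + 1).
  by rewrite divr_gt0 // ltr_wpDl.
have [N h] := hu _ e2; exists N => n /h hn.
rewrite -mulrBr normrM.
have c0 := normr_ge0 c.
have : `|c| * `|u n - a| <= `|c| * (e / (`|c| + 1)).
  by rewrite ler_wpM2l // ltW.
have : `|c| * (e / (`|c| + 1)) < e.
  rewrite mulrA ltr_pdivrMr ?ltr_wpDl //. nra.
lra.
Qed.

Lemma rcv_ext u v a : (forall n, u n = v n) -> rcv u a -> rcv v a.
Proof. by move=> E hu e e0; have [N h] := hu e e0; exists N => n; rewrite -E; apply: h. Qed.

Lemma rcv_unique u a b : rcv u a -> rcv u b -> a = b.
Proof.
move=> ha hb; apply/eqP; rewrite -subr_eq0 -normr_eq0; apply/eqP.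
apply/eqP; rewrite eq_le normr_ge0 andbT.
apply/ler_addgt0Pr => e e0; rewrite add0r.
have e2 : 0 < e / 2 by rewrite divr_gt0.
have [N1 h1] := ha _ e2; have [N2 h2] := hb _ e2.
have k1 := h1 (maxn N1 N2) (leq_maxl _ _).
have k2 := h2 (maxn N1 N2) (leq_maxr _ _).
have -> : a - b = (u (maxn N1 N2) - b) - (u (maxn N1 N2) - a) by ring.
apply: (le_trans (ler_normB _ _)); lra.
Qed.

Lemma rcv_le u v a b : (forall n, u n <= v n) -> rcv u a -> rcv v b -> a <= b.
Proof.
move=> uv ha hb; apply/ler_addgt0Pr => e e0.
have e2 : 0 < e / 2 by rewrite divr_gt0.
have [N1 h1] := ha _ e2; have [N2 h2] := hb _ e2.
have k1 := h1 (maxn N1 N2) (leq_maxl _ _).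
have k2 := h2 (maxn N1 N2) (leq_maxr _ _).
have := uv (maxn N1 N2).
move: k1 k2; rewrite !ltr_norml => /andP[? ?] /andP[? ?]; lra.
Qed.

End RCV.


Section Frame.
Local Open Scope complex_scope.
Local Open Scope ring_scope.

Variable R : realType.
Local Notation C := R[i].
Local Notation Re := complex.Re.
Local Notation Im := complex.Im.
Variable V : lmodType C.
Variable ip : V -> V -> C.
Variable HH : is_sep_hilbert ip.
Variable I : set nat.
Variable psi : nat -> V.

Local Notation D := (domC ip I psi).
Local Notation nm := (hnorm2 ip).

Definition T (f : V) := fun i => cabs2 (ip f (psi i)).
Definition q n f := sp I (T f) n.
Definition Q f := fine (ES I (T f)).

Lemma T0 f : forall i, i \in I -> 0 <= T f i.
Proof. by move=> i _; apply: cabs2_ge0. Qed.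

Lemma DE f : D f = (ES I (T f) < +oo)%E.
Proof. by []. Qed.

Lemma Q_ge0 f : 0 <= Q f.
Proof. by apply: fine_ge0; apply: ES_ge0; apply: T0. Qed.

Lemma q_le_Q f : D f -> forall n, q n f <= Q f.
Proof. by move=> Df n; apply: sp_le_fine => //; apply: T0. Qed.

Lemma q_ge0 f n : 0 <= q n f.
Proof. by apply: sumr_ge0 => i _; apply: cabs2_ge0. Qed.

Lemma rcv_q f : D f -> rcv (fun n => q n f) (Q f).
Proof.
move=> Df e e0; have [N hN] := sp_approx (@T0 f) Df e0.
exists N => n /hN h; have := q_le_Q Df n.
rewrite /q /Q in h * => h2; rewrite ler0_norm ?subr_le0 //; lra.
Qed.

Lemma D_bound f M : (forall n, q n f <= M) -> D f /\ Q f <= M.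
Proof.
move=> h; have H := ES_le (@T0 f) h.
have Df : D f by rewrite DE (le_lt_trans H) ?ltry.
split => //; move: H; rewrite (ES_fin (@T0 f) Df) lee_fin //.
Qed.

Lemma sp_lin3 (u v w : nat -> R) a b c n :
  sp I (fun i => a * u i + b * v i + c * w i) n = a * sp I u n + b * sp I v n + c * sp I w n.
Proof. by rewrite /sp !big_split /= -!mulr_sumr. Qed.

Lemma D0 : D 0.
Proof.
have [] := @D_bound 0 0 => // n; rewrite /q /sp big1 // => i _.
by rewrite /T (ip0l HH) /cabs2 /=; ring.
Qed.

Lemma DD f g : D f -> D g -> D (f + g).
Proof.
move=> Df Dg; have [] := @D_bound (f + g) (2 * Q f + 2 * Q g) => // n.
apply: (@le_trans _ _ (2 * q n f + 2 * q n g)); last first.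
  by apply: lerD; rewrite ler_pM2l ?q_le_Q.
have -> : 2 * q n f + 2 * q n g = sp I (fun i => 2 * T f i + 2 * T g i + 0 * T f i) n.
  by rewrite sp_lin3 mul0r addr0.
by apply: ler_sum => i _; rewrite /T (ipDl HH) mul0r addr0; apply: cabs2D_le.
Qed.

Lemma qZ a f n : q n (a *: f) = cabs2 a * q n f.
Proof.
rewrite /q /sp mulr_sumr; apply: eq_bigr => i _.
by rewrite /T (ipZl HH) cabs2M.
Qed.

Lemma DZ a f : D f -> D (a *: f).
Proof.
move=> Df; have [] := @D_bound (a *: f) (cabs2 a * Q f) => // n.
by rewrite qZ ler_wpM2l ?cabs2_ge0 ?q_le_Q.
Qed.

Lemma DN f : D f -> D (- f).
Proof. by move=> Df; rewrite -scaleN1r; apply: DZ. Qed.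

Lemma DB f g : D f -> D g -> D (f - g).
Proof. by move=> Df Dg; apply: DD => //; apply: DN. Qed.

Lemma QZ a f : D f -> Q (a *: f) = cabs2 a * Q f.
Proof.
move=> Df; apply: (rcv_unique (rcv_q (DZ a Df))).
by apply: rcv_ext (rcv_scale _ (rcv_q Df)) => n; rewrite qZ.
Qed.

Lemma QN f : D f -> Q (- f) = Q f.
Proof.
move=> Df; rewrite -scaleN1r QZ //.
by rewrite /cabs2 /=; rewrite -[RHS]mul1r; congr (_ * _); ring.
Qed.

Definition B f g := (Q (f + g) - Q (f - g)) / 4.

Lemma rcv4 (u1 u2 u3 u4 : nat -> R) a1 a2 a3 a4 c1 c2 c3 c4 :
  rcv u1 a1 -> rcv u2 a2 -> rcv u3 a3 -> rcv u4 a4 ->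
  rcv (fun n => c1 * u1 n + c2 * u2 n + c3 * u3 n + c4 * u4 n)
      (c1 * a1 + c2 * a2 + c3 * a3 + c4 * a4).
Proof.
move=> h1 h2 h3 h4.
apply: rcv_add; last exact: rcv_scale.
apply: rcv_add; last exact: rcv_scale.
apply: rcv_add; exact: rcv_scale.
Qed.

Lemma Qexp f g t : D f -> D g ->
  Q (f + t%:C *: g) = Q f + 2 * t * B f g + t ^+ 2 * Q g.
Proof.
move=> Df Dg.
have D1 : D (f + t%:C *: g) by apply: DD => //; apply: DZ.
apply: (rcv_unique (rcv_q D1)).
have := rcv4 (t / 2) (- (t / 2)) (t ^+ 2) 1 (rcv_q (DD Df Dg)) (rcv_q (DB Df Dg))
  (rcv_q Dg) (rcv_q Df).
have -> : t / 2 * Q (f + g) + - (t / 2) * Q (f - g) + t ^+ 2 * Q g + 1 * Q f =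
   Q f + 2 * t * B f g + t ^+ 2 * Q g by rewrite /B; field.
apply: rcv_ext => n.
rewrite /q /sp !mulr_sumr -!big_split /=; apply: eq_bigr => i _.
rewrite /T !(ipDl HH) ?(ipZl HH) ?(ipNl HH).
case: (ip f (psi i)) => a b; case: (ip g (psi i)) => c d; rewrite /cabs2 /=.
by field.
Qed.

Lemma Qpar f g : D f -> D g -> Q (f + g) + Q (f - g) = 2 * Q f + 2 * Q g.
Proof.
move=> Df Dg.
have := rcv_add (rcv_q (DD Df Dg)) (rcv_q (DB Df Dg)).
have := rcv_add (rcv_scale 2 (rcv_q Df)) (rcv_scale 2 (rcv_q Dg)).
move=> h1 h2; apply: (rcv_unique h2); apply: rcv_ext h1 => n.
rewrite /q /sp !mulr_sumr -!big_split /=; apply: eq_bigr => i _.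
rewrite /T !(ipDl HH) ?(ipZl HH) ?(ipNl HH).
case: (ip f (psi i)) => a b; case: (ip g (psi i)) => c d; rewrite /cabs2 /=.
ring.
Qed.

Lemma Badd f1 f2 g : D f1 -> D f2 -> D g -> B (f1 + f2) g = B f1 g + B f2 g.
Proof.
move=> D1 D2 Dg; rewrite /B.
have D12 := DD D1 D2.
have := rcv4 1 (-1) 1 (-1) (rcv_q (DD D1 Dg)) (rcv_q (DB D1 Dg))
  (rcv_q (DD D2 Dg)) (rcv_q (DB D2 Dg)).
have := rcv_add (rcv_q (DD D12 Dg)) (rcv_scale (-1) (rcv_q (DB D12 Dg))).
move=> h1 h2.
have E : Q (f1 + f2 + g) + -1 * Q (f1 + f2 - g) =
  1 * Q (f1 + g) + -1 * Q (f1 - g) + 1 * Q (f2 + g) + -1 * Q (f2 - g).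
  apply: (rcv_unique h1); apply: rcv_ext h2 => n.
  rewrite /q /sp !mulr_sumr -!big_split /=; apply: eq_bigr => i _.
  rewrite /T !(ipDl HH) ?(ipZl HH) ?(ipNl HH).
  case: (ip f1 (psi i)) => a b; case: (ip f2 (psi i)) => a' b';
  case: (ip g (psi i)) => c d; rewrite /cabs2 /=.
  ring.
by rewrite -mulrDl; congr (_ / _); lra.
Qed.

Lemma BCS f g : D f -> D g -> B f g ^+ 2 <= Q f * Q g.
Proof.
move=> Df Dg; apply: discr; first exact: Q_ge0.
move=> t; rewrite -(Qexp t Df Dg); exact: Q_ge0.
Qed.

Lemma B0 f : D f -> B f 0 = 0.
Proof. by move=> Df; rewrite /B addr0 subr0 subrr mul0r. Qed.

Definition P n f g := \sum_(0 <= i < n | i \in I) ip f (psi i) * (ip g (psi i))^*.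

Lemma ReP n f g : Re (P n f g) = (q n (f + g) - q n (f - g)) / 4.
Proof.
rewrite /P Re_sum /q /sp -sumrB mulr_suml; apply: eq_bigr => i _.
rewrite /T !(ipDl HH) ?(ipZl HH) ?(ipNl HH).
case: (ip f (psi i)) => a b; case: (ip g (psi i)) => c d; rewrite /cabs2 /=.
by field.
Qed.

Lemma ImP n f g : Im (P n f g) = Re (P n f ('i *: g)).
Proof.
rewrite /P Re_sum Im_sum; apply: eq_bigr => i _.
rewrite (ipZl HH).
case: (ip f (psi i)) => a b; case: (ip g (psi i)) => c d /=.
ring.
Qed.

Lemma rcv_ReP f g : D f -> D g -> rcv (fun n => Re (P n f g)) (B f g).
Proof.
move=> Df Dg.
have := rcv_add (rcv_scale (1/4) (rcv_q (DD Df Dg))) (rcv_scale (-(1/4)) (rcv_q (DB Df Dg))).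
have -> : 1 / 4 * Q (f + g) + - (1 / 4) * Q (f - g) = B f g by rewrite /B; field.
by apply: rcv_ext => n; rewrite ReP; field.
Qed.

Variable A : R.
Hypothesis A0 : 0 < A.
Hypothesis frame : forall f, domC ip I psi f ->
    ((A * hnorm2 ip f)%:E <= \sum_(0 <= i <oo | i \in I) (cabs2 (ip f (psi i)))%:E)%E.
Variable h : V.


Lemma QA f : D f -> A * nm f <= Q f.
Proof.
move=> Df; have := frame Df.
by rewrite -/(ES I (T f)) (ES_fin (@T0 f) Df) lee_fin.
Qed.

Lemma Q_eq0 g : D g -> Q g = 0 -> g = 0.
Proof.
move=> Dg Q0; apply: (hnorm2_eq0 HH); apply/eqP; rewrite eq_le hnorm2_ge0 // andbT.
have := QA Dg; rewrite Q0 => h0.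
by rewrite -(pmulr_rle0 _ A0).
Qed.

Definition L f := Re (ip h f).

Lemma L_lin f g t : L (f + t%:C *: g) = L f + t * L g.
Proof.
rewrite /L (ipDr HH) (ipZr HH).
by case: (ip h f) => ? ?; case: (ip h g) => ? ? /=; ring.
Qed.

Lemma L0 : L 0 = 0.
Proof. by rewrite /L (ip0r HH). Qed.

Lemma LD f g : L (f + g) = L f + L g.
Proof. by have := L_lin f g 1; rewrite scale1r mul1r. Qed.

Lemma LN f : L (- f) = - L f.
Proof. by rewrite /L (ipNr HH); case: (ip h f). Qed.

Lemma L_bound f : 2 * L f <= A * nm f + nm h / A.
Proof.
have := hnorm2_ge0 HH (A%:C *: f - h).
rewrite (hnorm2D HH) (hnorm2Z HH) (hnorm2N HH) (ipZl HH) (ipNr HH).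
have -> : cabs2 A%:C = A ^+ 2 by rewrite /cabs2 /=; ring.
rewrite /L (Re_ip_sym HH f h).
have := hnorm2_ge0 HH f; have := hnorm2_ge0 HH h.
case: (ip f h) => a b /= => n1 n2 H.
have kA : nm h / A * A = nm h by rewrite divfK ?gt_eqF.
rewrite -(ler_pM2r A0) [X in _ <= X]mulrDl kA; nra.
Qed.

Definition F f := Q f - 2 * L f.

Lemma F_lb f : D f -> - (nm h / A) <= F f.
Proof. move=> Df; have := QA Df; have := L_bound f; rewrite /F; lra. Qed.

Definition Fset := [set y | exists2 f, D f & F f = y].

Lemma Fset_inf : has_inf Fset.
Proof.
split; first by exists (F 0), 0 => //; apply: D0.
exists (- (nm h / A)) => y [f Df <-]; exact: F_lb.
Qed.

Definition m := inf Fset.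

Lemma m_le f : D f -> m <= F f.
Proof. by move=> Df; apply: ge_inf; [case: Fset_inf | exists f]. Qed.

Lemma mid_F f g : D f -> D g ->
  Q (f - g) = 2 * F f + 2 * F g - 4 * F ((1/2)%:C *: (f + g)).
Proof.
move=> Df Dg.
rewrite /F (QZ _ (DD Df Dg)).
have -> : L ((1 / 2)%:C *: (f + g)) = 1/2 * L (f + g).
  by rewrite -[_ *: _]add0r L_lin L0 add0r.
have := Qpar Df Dg; rewrite LD /cabs2 /=. 
move=> H. have -> : Q (f - g) = 2 * Q f + 2 * Q g - Q (f + g) by lra.
by field.
Qed.


Lemma inv_mono (N n : nat) : (N <= n)%N -> n.+1%:R^-1 <= N.+1%:R^-1 :> R.
Proof. by move=> hNn; rewrite lef_pV2 ?posrE ?ltr0n // ler_nat. Qed.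

Lemma archi_inv (e : R) : 0 < e -> exists N : nat, N.+1%:R^-1 < e.
Proof. by move=> e0; have [k] := ltr_add_invr e0; rewrite add0r; exists k. Qed.

Lemma exists_minseq : exists g : nat -> V,
  (forall n, D (g n)) /\ (forall n, F (g n) < m + n.+1%:R^-1).
Proof.
have H n : exists f, D f /\ F f < m + n.+1%:R^-1.
  have pn : 0 < n.+1%:R^-1 :> R by rewrite invr_gt0 ltr0n.
  have [y [f Df <-] hy] := inf_adherent pn Fset_inf.
  by exists f.
have [g Hg] := choice H; by exists g; split => n; case: (Hg n).
Qed.

Section Min.
Variable g : nat -> V.
Hypothesis Dg : forall n, D (g n).
Hypothesis Fg : forall n, F (g n) < m + n.+1%:R^-1.

Lemma cest n k : Q (g n - g k) <= 2 * n.+1%:R^-1 + 2 * k.+1%:R^-1.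
Proof.
rewrite mid_F //.
have := m_le (DZ (1/2)%:C (DD (Dg n) (Dg k))).
have := Fg n; have := Fg k; move: (n.+1%:R^-1) (k.+1%:R^-1) => a b; lra.
Qed.

Lemma small e : 0 < e -> exists N, forall n k, (N <= n)%N -> (N <= k)%N ->
  Q (g n - g k) < e.
Proof.
move=> e0; have e4 : 0 < e / 4 by rewrite divr_gt0.
have [N hN] := archi_inv e4; exists N => n k hn hk.
have := cest n k; have := inv_mono hn; have := inv_mono hk; move: hN; move: (n.+1%:R^-1) (k.+1%:R^-1) (N.+1%:R^-1) => a b c; lra.
Qed.

Lemma gcauchy : forall e : R, 0 < e -> exists N : nat, forall m n, (N <= m)%N -> (N <= n)%N ->
        hnorm2 ip (g m - g n) < e.
Proof.
move=> e e0; have [N hN] := small (mulr_gt0 A0 e0).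
exists N => a b ha hb; have := hN a b ha hb; have := QA (DB (Dg a) (Dg b)).
move=> h1 h2; rewrite -(ltr_pM2l A0); lra.
Qed.

Lemma exists_lim : exists x, forall e : R, 0 < e -> exists N : nat, forall n, (N <= n)%N ->
        hnorm2 ip (g n - x) < e.
Proof. exact: (ip_complete HH gcauchy). Qed.

Section X.
Variable x : V.
Hypothesis Hx : forall e : R, 0 < e -> exists N : nat, forall n, (N <= n)%N ->
        hnorm2 ip (g n - x) < e.

Lemma near_x e : 0 < e -> exists N, forall n, (N <= n)%N -> D (g n - x) /\ Q (g n - x) <= e.
Proof.
move=> e0; have e4 : 0 < e / 4 by rewrite divr_gt0.
have [N hN] := small e4; exists N => n nN; apply: D_bound => M.
set PM := \sum_(0 <= i < M | i \in I) nm (psi i).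
have PM0 : 0 <= PM by apply: sumr_ge0 => i _; apply: hnorm2_ge0.
have d0 : 0 < (e / 4) / (2 * PM + 1) by rewrite divr_gt0 // ltr_wpDl // mulr_ge0.
have [K hK] := Hx d0.
set k := maxn N K.
have hk := hK k (leq_maxr _ _).
have qk : q M (g k - x) <= e / 4.
  apply: (@le_trans _ _ (2 * nm (g k - x) * PM)).
    rewrite /q /sp /PM mulr_sumr; apply: ler_sum => i _.
    by rewrite /T -mulrA; apply: cabs2_ip.
  have dE : (e / 4) / (2 * PM + 1) * (2 * PM + 1) = e / 4.
    by rewrite divfK // gt_eqF // ltr_wpDl // mulr_ge0.
  have nk0 := hnorm2_ge0 HH (g k - x).
  move: dE d0 hk nk0; move: ((e / 4) / (2 * PM + 1)) => d dE dd0 hk' nk0.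
  have : 0 <= (d - nm (g k - x)) * PM by rewrite mulr_ge0 // subr_ge0 ltW.
  nra.
have qnk : q M (g n - g k) < e / 4.
  apply: (le_lt_trans (q_le_Q (DB (Dg n) (Dg k)) M)).
  by apply: hN => //; rewrite /k leq_maxl.
apply: (@le_trans _ _ (2 * q M (g n - g k) + 2 * q M (g k - x))); last lra.
have -> : 2 * q M (g n - g k) + 2 * q M (g k - x) =
   sp I (fun i => 2 * T (g n - g k) i + 2 * T (g k - x) i + 0 * T x i) M.
  by rewrite sp_lin3 mul0r addr0.
apply: ler_sum => i _; rewrite mul0r addr0 /T.
have -> : g n - x = (g n - g k) + (g k - x) by rewrite addrA subrK.
by rewrite (ipDl HH); apply: cabs2D_le.
Qed.

Lemma Dx : D x.
Proof.
have [N hN] := near_x ltr01; have [Dn _] := hN N (leqnn N).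
have -> : x = g N - (g N - x) by rewrite opprB addrC subrK.
exact: DB.
Qed.

Lemma euler f : D f -> B x f = L f.
Proof.
move=> Df.
have Dx' := Dx.
suff H : forall eta, 0 < eta -> (B x f - L f) ^+ 2 < eta.
  apply/eqP; rewrite -subr_eq0 -sqrf_eq0; apply/eqP.
  apply/eqP; rewrite eq_le sqr_ge0 andbT.
  apply/ler_addgt0Pr => e e0; rewrite add0r; exact: ltW (H e e0).
move=> eta eta0.
set c := Q f + 1.
have c0 : 0 < c by rewrite /c ltr_wpDl // Q_ge0.
have ec0 : 0 < eta / (8 * c) by rewrite divr_gt0 // mulr_gt0.
have [N1 h1] := near_x ec0.
have [K hK] := archi_inv ec0.
set n := maxn N1 K.
have [Dnx Qnx] := h1 n (leq_maxl _ _).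
have hinv := inv_mono (leq_maxr N1 K : (K <= n)%N).
have st1 : (B (g n) f - L f) ^+ 2 <= n.+1%:R^-1 * Q f.
  apply: discr; first exact: Q_ge0.
  move=> t.
  have := m_le (DD (Dg n) (DZ t%:C Df)).
  rewrite /F (Qexp t (Dg n) Df) L_lin.
  have := Fg n; rewrite /F.
  move: (n.+1%:R^-1) => a; lra.
have st2 : B (g n) f = B x f + B (g n - x) f.
  by rewrite -Badd // addrC subrK.
have st3 := BCS Dnx Df.
have Qf0 := Q_ge0 f.
have Qnx0 := Q_ge0 (g n - x).
have st4 : B (g n - x) f ^+ 2 <= eta / (8 * c) * Q f.
  apply: (le_trans st3); rewrite ler_wpM2r //.
have st5 : n.+1%:R^-1 * Q f <= eta / (8 * c) * Q f.
  by rewrite ler_wpM2r // ltW // (le_lt_trans hinv hK).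
have st6 : eta / (8 * c) * Q f < eta / 4.
  have -> : eta / (8 * c) * Q f = eta / 8 * (Q f / c) by field; rewrite gt_eqF.
  have : Q f / c < 1 by rewrite ltr_pdivrMr // mul1r /c ltrDl.
  move: (Q f / c) => u h1'. nra.
move: st1 st4 st5 st6; rewrite st2.
move: (B x f) (B (g n - x) f) (L f) (n.+1%:R^-1 * Q f) (eta / (8 * c) * Q f) => b1 b2 l w z.
move=> s1 s4 s5 s6.
have : (b1 + b2 - l) ^+ 2 <= w by [].
move=> s1'.
have : (b1 - l) ^+ 2 <= 2 * (b1 + b2 - l) ^+ 2 + 2 * b2 ^+ 2.
  have := sqr_ge0 (b1 + 2 * b2 - l). nra.
nra.
Qed.

Lemma riesz f : D f -> cconv (fun n => P n x f) (ip h f).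
Proof.
move=> Df; apply: cconv_of_parts.
  have := rcv_ReP Dx Df; rewrite euler //.
have Dif := DZ 'i Df.
have := rcv_ReP Dx Dif; rewrite euler //.
have -> : L ('i *: f) = Im (ip h f).
  by rewrite /L (ipZr HH); case: (ip h f) => a b /=; ring.
move=> H e e0; have [N hN] := H e e0; exists N => n hn.
by rewrite ImP; apply: hN.
Qed.

End X.
End Min.


Lemma riesz_exists : exists x, D x /\ forall f, D f -> cconv (fun n => P n x f) (ip h f).
Proof.
have [g [Dg Fg]] := exists_minseq.
have [x Hx] := exists_lim Dg Fg.
exists x; split; first exact: (Dx Dg Fg Hx).
by move=> f Df; apply: (riesz Dg Fg Hx).
Qed.

End Frame.


Lemma cj_sum (R : realType) (r : seq nat) (Pr : pred nat) (F : nat -> R[i]) :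
  (\sum_(i <- r | Pr i) F i)^* = \sum_(i <- r | Pr i) (F i)^*.
Proof.
apply: (big_morph (fun z : R[i] => z^*)).
  by move=> a b; rewrite cjD.
by rewrite cj0.
Qed.

Lemma cjK (R : realType) (z : R[i]) : (z^*)^* = z.
Proof. by case: z => a b; apply/eqP; rewrite eq_complex /= opprK !eqxx. Qed.

Lemma cconv_ext (R : realType) (u v : nat -> R[i]) a :
  (forall n, u n = v n) -> cconv u a -> cconv v a.
Proof. by move=> E hu e e0; have [N hN] := hu e e0; exists N => n; rewrite -E; apply: hN. Qed.

Unset Implicit Arguments.
Set Strict Implicit.

Theorem lemma6p13 (R : realType) (V : lmodType R[i]) (ip : V -> V -> R[i])
  (I : set nat) (psi psit : nat -> V) (h : V) (c : nat -> R[i]) :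
  is_sep_hilbert ip ->
  lower_frame_seq ip I psi ->
  is_canonical_dual ip I psi psit ->
  weakly_represents ip I psi c h ->
  (\sum_(0 <= i <oo | i \in I) (cabs2 (c i))%:E =
     \sum_(0 <= i <oo | i \in I) (cabs2 (ip h (psit i)))%:E +
     \sum_(0 <= i <oo | i \in I) (cabs2 (c i - ip h (psit i)))%:E)%E /\
  (\sum_(0 <= i <oo | i \in I) (cabs2 (ip h (psit i)))%:E <=
     \sum_(0 <= i <oo | i \in I) (cabs2 (c i))%:E)%E.
Proof.
move=> HH [A [A0 frame]] dual wr.
have [x [Dx Rx]] := riesz_exists HH A0 frame h.
have HPx : HPsi ip I psi x.
  move=> e e0; exists x => //.
  by rewrite subrr /hnorm2 (ip0l HH).
have dE : forall i, i \in I -> ip h (psit i) = ip x (psi i).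
  move=> i iI; have [p [[Hp perp] [Dpt [_ Gam]]]] := dual i iI.
  have c1 := cconv_conj (Gam x Dx).
  have c2 := Rx (psit i) Dpt.
  have E : ip h (psit i) = (ip p x)^*.
    apply: (cconv_unique c2); apply: (cconv_ext _ c1).
    move=> n; rewrite /P cj_sum; apply: eq_bigr => k _.
    by rewrite cjM cjK mulrC.
  rewrite E.
  have := perp x HPx; rewrite (ipBl HH) => /eqP; rewrite subr_eq0 => /eqP <-.
  by rewrite (ipC HH x (psi i)).
have E := ES_split (I := I) (ta := fun i => cabs2 (ip h (psit i)))
  (tb := fun i => cabs2 (c i - ip h (psit i))) (tc := fun i => cabs2 (c i))
  (tr := fun i => complex.Re ((c i - ip h (psit i)) * (ip h (psit i))^*))
  (fun i _ => cabs2_ge0 _) (fun i _ => cabs2_ge0 _) (fun i _ => cabs2_ge0 _).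
have {}E : ES I (fun i => cabs2 (c i)) = (ES I (fun i => cabs2 (ip h (psit i))) +
     ES I (fun i => cabs2 (c i - ip h (psit i))%R))%E.
  apply: E.
    move=> i _; case: (c i) => a b; case: (ip h (psit i)) => a' b'.
    by rewrite /cabs2 /=; ring.
  move=> e e0.
  have e' : 0 < e ^+ 2 / 4 by rewrite divr_gt0 // exprn_gt0.
  have [N1 h1] := wr x Dx _ e'. have [N2 h2] := Rx x Dx _ e'.
  exists (maxn N1 N2) => n hn.
  have k1 := h1 n (leq_trans (leq_maxl _ _) hn).
  have k2 := h2 n (leq_trans (leq_maxr _ _) hn).
  set X := \sum_(0 <= i < n | i \in I) c i * ip (psi i) x in k1.
  set Y := P ip I psi n x x in k2.
  have -> : sp I (fun i => complex.Re ((c i - ip h (psit i)) * (ip h (psit i))^*)) n =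
      complex.Re (X - Y).
    rewrite /sp /X /Y /P -sumrB Re_sum; apply: eq_bigr => k kI.
    by rewrite dE // (ipC HH (psi k) x); congr complex.Re; ring.
  apply: sq_lt => //.
  have := cabs2D_le (X - ip h x) (ip h x - Y).
  have -> : X - ip h x + (ip h x - Y) = X - Y by rewrite addrA subrK.
  rewrite -(cabs2N (ip h x - Y)) opprB.
  have : complex.Re (X - Y) ^+ 2 <= cabs2 (X - Y).
    by rewrite /cabs2 lerDl sqr_ge0.
  lra.
split; first exact: E.
have H2 : (ES I (fun i => cabs2 (ip h (psit i))) <= ES I (fun i => cabs2 (c i)))%E.
  by rewrite E; apply: leeDl; apply: ES_ge0 => i _; exact: cabs2_ge0.
exact: H2.
Qed.
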